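(* Let $w$ be an infinite word, and let $n'<n''$ be two consecutive lengths of palindromic prefixes of $w$ (i.e. no palindromic prefix of $w$ has length strictly between them), with corresponding prefixes $\pi'$ and $\pi''$, and write $\pi''=\pi'\omega$. Then every palindromic prefix $\pi$ of $w$ with $n'\le|\pi|\le n'+n''$ can be written $\pi=\pi'\omega^t$ for some integer $t\ge0$.
   Context: Infinite words are right-infinite; a finite word is a palindrome if it equals its reversal, the empty word being a palindrome; $|u|$ is the length of $u$. *)

(* Defs.v *)
From mathcomp Require Import all_boot.
Set Implicit Arguments. Unset Strict Implicit. Unset Printing Implicit Defensive.

Definition pref (A : Type) (w : nat -> A) (n : nat) : seq A := mkseq w n.

Definition palindrome (A : Type) (u : seq A) : Prop := rev u = u.

Definition wpow (A : Type) (u : seq A) (t : nat) : seq A := flatten (nseq t u).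

(* Main.v *)
Require Import Defs.
From mathcomp Require Import all_boot.
From mathcomp Require Import zify.

Section S.
Variable (A : Type) (w : nat -> A).

Definition palw n := forall i, i < n -> w i = w (n.-1 - i).
Definition per n p := forall i, i + p < n -> w i = w (i + p).

Lemma pal_palw n : palindrome (pref w n) <-> palw n.
Proof.
rewrite /palindrome /pref /palw; split.
- move=> H i Hi.
  have := congr1 (fun s => nth (w 0) s i) H => /=.
  rewrite nth_rev size_mkseq // !nth_mkseq //; last by lia.
  move=> <-; congr w; lia.
- move=> H; apply: (@eq_from_nth _ (w 0)); first by rewrite size_rev.
  move=> i; rewrite size_rev size_mkseq => Hi.
  rewrite nth_rev size_mkseq // !nth_mkseq //; last by lia.
  rewrite H; last by lia. congr w; lia.
Qed.

Lemma lemA n k : palw n -> palw k -> k <= n -> per n (n - k).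
Proof.
move=> Hn Hk Hkn i Hi.
rewrite Hk; last by lia.
rewrite (Hn (i + (n - k))); last by lia.
congr w; lia.
Qed.

Lemma lemB n p : palw n -> per n p -> p <= n -> palw (n - p).
Proof.
move=> Hn Hp Hpn i Hi.
rewrite Hp; last by lia.
rewrite Hn; last by lia.
congr w; lia.
Qed.

Lemma per_mono n n' p : n' <= n -> per n p -> per n' p.
Proof. move=> H Hp i Hi; apply: Hp; lia. Qed.

Lemma per_iter N p k j : per N p -> j + k * p < N -> w (j + k * p) = w j.
Proof.
move=> Hp; elim: k => [|k IH] H; first by rewrite mul0n addn0.
rewrite mulSn.
have -> : j + (p + k * p) = (j + k * p) + p by lia.
rewrite -Hp; last by lia.
apply: IH; lia.
Qed.

Lemma pref_split a b : pref w (a + b) = pref w a ++ mkseq (fun j => w (a + j)) b.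
Proof.
rewrite /pref /mkseq iotaD map_cat add0n -[in iota a b](addn0 a) iotaDl -map_comp; congr (_ ++ _).
Qed.

Lemma wpow_rcons (u : seq A) t : wpow u t.+1 = wpow u t ++ u.
Proof.
elim: t => [|t IH]; first by rewrite /wpow /= cats0.
change (u ++ wpow u t.+1 = (u ++ wpow u t) ++ u); by rewrite IH catA.
Qed.

Lemma eq_mkseq_lt (f g : nat -> A) n : (forall j, j < n -> f j = g j) -> mkseq f n = mkseq g n.
Proof.
move=> H; rewrite /mkseq; apply/eq_in_map => j; rewrite mem_iota add0n => /andP[_ Hj].
exact: H.
Qed.

Lemma final n1 p t : per (n1 + t * p) p ->
  pref w (n1 + t * p) = pref w n1 ++ wpow (mkseq (fun j => w (n1 + j)) p) t.
Proof.
elim: t => [|t IH] H; first by rewrite mul0n addn0 /wpow /= cats0.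
rewrite wpow_rcons catA -IH; last by apply: (@per_mono (n1 + t.+1 * p)) => //; lia.
have -> : n1 + t.+1 * p = (n1 + t * p) + p by lia.
rewrite pref_split; congr (_ ++ _); apply: eq_mkseq_lt => j Hj.
have -> : n1 + t * p + j = (n1 + j) + t * p by lia.
apply: (@per_iter _ _ t (n1 + j) H); lia.
Qed.

Lemma mainl n1 n2 : n1 < n2 -> palw n1 -> palw n2 ->
  (forall m, n1 < m -> m < n2 -> ~ palw m) ->
  forall m, n1 <= m -> m <= n1 + n2 -> palw m ->
  exists t, m = n1 + t * (n2 - n1) /\ per m (n2 - n1).
Proof.
move=> H12 P1 P2 Hb m; elim/ltn_ind: m => m IH Hm1 Hm2 Pm.
have Pp : per n2 (n2 - n1) by apply: lemA => //; lia.
case: (leqP m n2) => Hmn2.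
- case: (ltngtP n1 m) => Hc.
  + case: (ltngtP m n2) => Hd; [by case: (Hb m) | lia |].
    exists 1; split; first lia. by rewrite Hd.
  + lia.
  + exists 0; split; first lia. apply: (@per_mono n2); [lia | done].
- set q := m - n2.
  have Pq : per m q by apply: lemA => //; lia.
  have Pq2 : per n2 q by apply: (@per_mono m) => //; lia.
  have P3 : palw (n2 - q) by apply: lemB => //; lia.
  have Hq : n2 - q <= n1.
    case: (leqP (n2 - q) n1) => // Hc. by case: (Hb (n2 - q)) => //; lia.
  have Pmp : per m (n2 - n1).
    move=> i Hi.
    case: (ltnP (i + (n2 - n1)) n2) => Hc; first by apply: Pp.
    have -> : i = (i - q) + q by lia.
    rewrite -Pq; last by lia.
    have -> : i - q + q + (n2 - n1) = (i - q + (n2 - n1)) + q by lia.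
    rewrite -Pq; last by lia.
    apply: Pp; lia.
  have P4 : palw (m - (n2 - n1)) by apply: lemB => //; lia.
  have [|||t [Ht _]] := IH (m - (n2 - n1)) _ _ _ P4; try lia.
  exists t.+1; split => //; lia.
Qed.

End S.

Theorem lemma5p4 (A : Type) (w : nat -> A) (n1 n2 : nat) :
  n1 < n2 ->
  palindrome (pref w n1) ->
  palindrome (pref w n2) ->
  (forall m, n1 < m -> m < n2 -> ~ palindrome (pref w m)) ->
  forall m, n1 <= m -> m <= n1 + n2 -> palindrome (pref w m) ->
  exists t : nat, pref w m = pref w n1 ++ wpow (drop n1 (pref w n2)) t.
Proof.
move=> H12 /pal_palw P1 /pal_palw P2 Hb m Hm1 Hm2 /pal_palw Pm.
have Hb' : forall m0, n1 < m0 -> m0 < n2 -> ~ @palw A w m0.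
  by move=> k Hk1 Hk2 /pal_palw; apply: Hb.
have [t [-> Ht]] := @mainl A w n1 n2 H12 P1 P2 Hb' m Hm1 Hm2 Pm.
exists t; rewrite final //.
have -> : n2 = n1 + (n2 - n1) by lia.
by rewrite pref_split drop_size_cat ?size_mkseq // addKn.
Qed.
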